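(* Let $A$ be a finite set, let $\overset{*}{<}=(\overset{x}{<},\overset{y}{<})$ be a regular double order on $A$ and let $\sigma\in\Sigma_A$. Then $\overset{*}{<}\bar\cup\,(\overset{*}{<}\sigma)$ is a double order if and only if $\sigma$ is the identity.
   Context: A strict partial order is a transitive irreflexive relation; it is semi-linear if it is induced by a surjection $h:A\to\{1,\dots,l\}$ (i.e. $a<b$ iff $h(a)<h(b)$). For strict partial orders $<_1,<_2$, $<_1\bar\cup<_2$ denotes the transitive closure of their union. A double order on $A$ is a pair $(\overset{x}{<},\overset{y}{<})$ of strict partial orders on $A$ such that for all $a\ne b$ at least one of $a\overset{x}{<}b$, $b\overset{x}{<}a$, $a\overset{y}{<}b$, $b\overset{y}{<}a$ holds. It is regular if $\overset{x}{<}$ is semi-linear and $a\overset{x}{<}b$ implies neither $a\overset{y}{<}b$ nor $b\overset{y}{<}a$. For double orders $\overset{*}{<}_1,\overset{*}{<}_2$, the union $\overset{*}{<}_1\bar\cup\overset{*}{<}_2=(\overset{x}{<}_1\bar\cup\overset{x}{<}_2,\overset{y}{<}_1\bar\cup\overset{y}{<}_2)$; it is a double order exactly when both components are irreflexive. $\Sigma_A$ acts on the right by $(\overset{x}{<},\overset{y}{<})\sigma=(\overset{x}{<}\sigma,\overset{y}{<}\sigma)$, where $a(\overset{x}{<}\sigma)b$ iff $\sigma(a)\overset{x}{<}\sigma(b)$, and similarly for $y$. *)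

(* Defs.v *)
From mathcomp Require Import all_boot all_fingroup.
From Stdlib Require Import Relations.
Set Implicit Arguments. Unset Strict Implicit. Unset Printing Implicit Defensive.

Section DoubleOrders.
Variable A : finType.

Definition relA := A -> A -> Prop.

Definition strict_po (r : relA) : Prop :=
  (forall a, ~ r a a) /\ (forall a b c, r a b -> r b c -> r a c).

Definition semilinear (r : relA) : Prop :=
  exists (l : nat) (h : A -> nat),
    (forall a, 1 <= h a <= l) /\
    (forall k, 1 <= k <= l -> exists a, h a = k) /\
    (forall a b, r a b <-> h a < h b).

Definition tc_union (r1 r2 : relA) : relA :=
  clos_trans A (fun a b => r1 a b \/ r2 a b).

Definition double_order (rx ry : relA) : Prop :=
  strict_po rx /\ strict_po ry /\
  (forall a b, a <> b -> rx a b \/ rx b a \/ ry a b \/ ry b a).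

Definition regular_double_order (rx ry : relA) : Prop :=
  double_order rx ry /\ semilinear rx /\
  (forall a b, rx a b -> ~ ry a b /\ ~ ry b a).

(* right action of a permutation: a (r sigma) b iff sigma a r sigma b *)
Definition perm_act (r : relA) (s : {perm A}) : relA :=
  fun a b => r (s a) (s b).

End DoubleOrders.

(* Main.v *)
Require Import Defs.
From mathcomp Require Import all_boot all_fingroup.
From Stdlib Require Import Relations ClassicalEpsilon.

Lemma key_lemma (A : finType) (R : A -> A -> bool) (s : {perm A}) :
  (forall a b c, R a b -> R b c -> R a c) ->
  (forall a b, R a b || R b a) ->
  (forall a b, ~~ R b a -> R (s a) (s b)) ->
  forall a, R a (s a) /\ R (s a) a.
Proof.
move=> Rt Rtot Hm.
have Rr : forall a, R a a by move=> a; have := Rtot a a; rewrite orbb.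
have DE : forall c, [set a | R a c] = s @^-1: [set a | R a c].
  move=> c.
  have Hsub : [set a | R a c] \subset s @^-1: [set a | R a c].
    apply/subsetP => a; rewrite !inE => Hac.
    apply/negPn/negP => Hsac.
    have Hsub2 : s @^-1: [set a | R a c] \subset [set a | R a c].
      apply/subsetP => b; rewrite !inE => Hsbc.
      apply/negPn/negP => Hbc.
      have Hba : ~~ R b a by apply/negP => Hba; case/negP: Hbc; exact: Rt Hba Hac.
      have := Hm _ _ Hba => Hsab.
      by case/negP: Hsac; exact: Rt Hsab Hsbc.
    have Heq := subset_cardP ((card_preimset [set a | R a c] (@perm_inj _ s))) Hsub2.
    by move: (Heq a); rewrite !inE Hac (negbTE Hsac).
  apply/setP => a.
  exact: (subset_cardP (esym (card_preimset [set a | R a c] (@perm_inj _ s))) Hsub a).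
move=> a; split.
- by move: (DE (s a)) => /setP /(_ a); rewrite !inE Rr.
- by move: (DE a) => /setP /(_ a); rewrite !inE Rr.
Qed.

Definition pb (P : Prop) : bool :=
  if excluded_middle_informative P then true else false.
Lemma pbP (P : Prop) : reflect P (pb P).
Proof. by rewrite /pb; case: excluded_middle_informative => H; constructor. Qed.

Lemma tc_id (A : finType) (r : A -> A -> Prop) :
  strict_po r -> forall a b, tc_union r (perm_act r 1%g) a b <-> r a b.
Proof.
move=> [_ Htr] a b; split.
- elim=> [x y [H|H] | x y z _ H1 _ H2]; last exact: Htr H1 H2.
  + exact H.
  + by move: H; rewrite /perm_act !perm1.
- by move=> H; apply: t_step; left.
Qed.

Theorem proposition4p5 (A : finType) (rx ry : A -> A -> Prop) (s : {perm A}) :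
  regular_double_order rx ry ->
  (double_order (tc_union rx (perm_act rx s)) (tc_union ry (perm_act ry s))
   <-> s = 1%g).
Proof.
move=> [[Hx [Hy Htot]] [[l [h [_ [_ Hh]]]] Hxy]].
split; last first.
  move=> ->.
  have Ex := @tc_id _ _ Hx; have Ey := @tc_id _ _ Hy.
  split; [|split].
  - split; first by move=> a /Ex; apply Hx.1.
    by move=> a b c H1 H2; apply: t_trans H1 H2.
  - split; first by move=> a /Ey; apply Hy.1.
    by move=> a b c H1 H2; apply: t_trans H1 H2.
  - move=> a b /Htot; rewrite -!Ex -!Ey; tauto.
move=> [[HX _] [[HY _] _]].
have F1 : forall a b, h a < h b -> h (s a) <= h (s b).
  move=> a b hab; rewrite leqNgt; apply/negP => hba.
  apply: (HX a); apply: (@t_trans _ _ a b a); apply: t_step.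
  - by left; apply/Hh.
  - by right; rewrite /perm_act; apply/Hh.
have F2 : forall a, h (s a) = h a.
  move=> a.
  have K := @key_lemma A (fun a b => h a <= h b) s.
  case: (K _ _ _ a).
  - by move=> x y z H1 H2; exact: leq_trans H1 H2.
  - by move=> x y; apply: leq_total.
  - by move=> x y; rewrite -ltnNge; apply: F1.
  by move=> H1 H2; apply/eqP; rewrite eqn_leq H1 H2.
have F3 : forall a b, a <> b -> h a = h b -> ry a b \/ ry b a.
  move=> a b nab hab; case: (Htot a b nab) => [/Hh|[/Hh|//]].
  - by rewrite hab ltnn.
  - by rewrite hab ltnn.
have F4 : forall a b, ry a b -> h a = h b.
  move=> a b H; case: (ltngtP (h a) (h b)) => // /Hh /Hxy [H1 H2].
  - by case: H1.
  - by case: H2.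
pose Rp a b := h a < h b \/ (h a = h b /\ (a = b \/ ry a b)).
have KL := @key_lemma A (fun a b => pb (Rp a b)) s.
have Eq : forall a, s a = a.
  move=> a.
  case: (KL _ _ _ a).
  - move=> x y z /pbP H1 /pbP H2; apply/pbP; rewrite /Rp in H1 H2 *.
    case: H1 => [H1|[H1 H1']]; case: H2 => [H2|[H2 H2']].
    + by left; apply: ltn_trans H1 H2.
    + by left; rewrite -H2.
    + by left; rewrite H1.
    + right; split; first by rewrite H1.
      case: H1' => [->//|H1']; case: H2' => [<-|H2']; first by right.
      by right; apply: Hy.2 H1' H2'.
  - move=> x y; apply/orP; rewrite /Rp.
    case: (ltngtP (h x) (h y)) => H.
    + by left; apply/pbP; left.
    + by right; apply/pbP; left.
    + case: (classic (x = y)) => [->|nxy].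
        by left; apply/pbP; right; split => //; left.
      case: (F3 _ _ nxy H) => Hr.
        by left; apply/pbP; right; split => //; right.
      by right; apply/pbP; right; split => //; right.
  - move=> x y /pbP H; apply/pbP; rewrite /Rp !F2.
    case: (ltngtP (h x) (h y)) => Hl.
    + by left.
    + by exfalso; apply: H; left.
    + right; split => //.
      case: (classic (s x = s y)) => [->|nxy]; first by left.
      have nxy' : x <> y by move=> E; apply: nxy; rewrite E.
      have ryxy : ry x y.
        case: (F3 _ _ nxy' Hl) => // Hr; exfalso; apply: H; right; split; [by rewrite Hl | by right].
      have hs : h (s x) = h (s y) by rewrite !F2.
      case: (F3 _ _ nxy hs) => Hr; first by right.
      exfalso; apply: (HY x); apply: (@t_trans _ _ x y x); apply: t_step.
      * by left.
      * by right.
  - move=> /pbP H1 /pbP H2; rewrite /Rp F2 in H1 H2.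
    case: H1 => [H1|[_ [H1|H1]]]; first by rewrite ltnn in H1.
      by rewrite -H1.
    case: H2 => [H2|[_ [H2|H2]]]; first by rewrite ltnn in H2.
      by [].
    by exfalso; apply: (Hy.1 a); apply: Hy.2 H1 H2.
by apply/permP => a; rewrite perm1 Eq.
Qed.
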